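(* Let $A$ be an MV-algebra and $d$ a $(\odot,\vee)$-derivation on $A$. The following are equivalent: (1) $d$ is isotone and $d(1)\in\mathbf{B}(A)$; (2) $d(x\oplus y)=d(x)\oplus d(y)$ for all $x,y\in A$; (3) $d(x\odot y)=d(x)\odot d(y)$ for all $x,y\in A$.
   Context: An MV-algebra is an algebra $(A,\oplus,{}^*,0)$ of type $(2,1,0)$ satisfying: $x\oplus(y\oplus z)=(x\oplus y)\oplus z$, $x\oplus y=y\oplus x$, $x\oplus 0=x$, $x^{**}=x$, $x\oplus 0^*=0^*$, $(x^*\oplus y)^*\oplus y=(y^*\oplus x)^*\oplus x$. Put $1=0^*$ and $x\odot y=(x^*\oplus y^* )^*$. The natural order is $x\le y$ iff $x^*\oplus y=1$, with lattice operations $x\vee y=(x\odot y^* )\oplus y$, $x\wedge y=x\odot(x^*\oplus y)$. The Boolean center is $\mathbf{B}(A)=\{x\in A: x\oplus x=x\}$. A $(\odot,\vee)$-derivation on $A$ is a map $d:A\to A$ with $d(x\odot y)=(d(x)\odot y)\vee(x\odot d(y))$ for all $x,y\in A$; it is isotone if $x\le y$ implies $d(x)\le d(y)$. *)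

(* Defs.v *)
Record MVAlgebra := {
  mv_car :> Type;
  mv_oplus : mv_car -> mv_car -> mv_car;
  mv_neg : mv_car -> mv_car;
  mv_zero : mv_car;
  mv_assoc : forall x y z, mv_oplus x (mv_oplus y z) = mv_oplus (mv_oplus x y) z;
  mv_comm : forall x y, mv_oplus x y = mv_oplus y x;
  mv_zero_r : forall x, mv_oplus x mv_zero = x;
  mv_negK : forall x, mv_neg (mv_neg x) = x;
  mv_one_absorb : forall x, mv_oplus x (mv_neg mv_zero) = mv_neg mv_zero;
  mv_luk : forall x y,
    mv_oplus (mv_neg (mv_oplus (mv_neg x) y)) y
    = mv_oplus (mv_neg (mv_oplus (mv_neg y) x)) x
}.

Arguments mv_oplus {A} : rename.
Arguments mv_neg {A} : rename.
Arguments mv_zero {A} : rename.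

Section Ops.
Variable A : MVAlgebra.

Definition mv_one : A := mv_neg mv_zero.
Definition mv_odot (x y : A) : A := mv_neg (mv_oplus (mv_neg x) (mv_neg y)).
Definition mv_le (x y : A) : Prop := mv_oplus (mv_neg x) y = mv_one.
Definition mv_join (x y : A) : A := mv_oplus (mv_odot x (mv_neg y)) y.
Definition mv_meet (x y : A) : A := mv_odot x (mv_oplus (mv_neg x) y).
Definition in_boolean_center (x : A) : Prop := mv_oplus x x = x.

Definition odot_join_derivation (d : A -> A) : Prop :=
  forall x y, d (mv_odot x y) = mv_join (mv_odot (d x) y) (mv_odot x (d y)).

Definition isotone (d : A -> A) : Prop :=
  forall x y, mv_le x y -> mv_le (d x) (d y).
End Ops.

Arguments mv_one {A}.
Arguments mv_odot {A}.
Arguments mv_le {A}.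
Arguments mv_join {A}.
Arguments mv_meet {A}.
Arguments in_boolean_center {A}.
Arguments odot_join_derivation {A}.
Arguments isotone {A}.

(* Main.v *)
Require Import Defs.
From Stdlib Require Import Setoid.

Set Implicit Arguments.
Section MV.
Variable A : MVAlgebra.
Local Notation "x ⊕ y" := (@mv_oplus A x y) (at level 50, left associativity).
Local Notation "¬ x" := (@mv_neg A x) (at level 35, right associativity).
Local Notation "x ⊙ y" := (@mv_odot A x y) (at level 40, left associativity).
Local Notation o0 := (@mv_zero A).
Local Notation o1 := (@mv_one A).

Lemma addA (x y z : A) : x ⊕ (y ⊕ z) = x ⊕ y ⊕ z. Proof. apply mv_assoc. Qed.
Lemma addC (x y : A) : x ⊕ y = y ⊕ x. Proof. apply mv_comm. Qed.
Lemma add0 (x : A) : x ⊕ o0 = x. Proof. apply mv_zero_r. Qed.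
Lemma add0l (x : A) : o0 ⊕ x = x. Proof. rewrite addC; apply add0. Qed.
Lemma negK (x : A) : ¬ ¬ x = x. Proof. apply mv_negK. Qed.
Lemma add1 (x : A) : x ⊕ o1 = o1. Proof. apply mv_one_absorb. Qed.
Lemma add1l (x : A) : o1 ⊕ x = o1. Proof. rewrite addC; apply add1. Qed.
Lemma neg1 : ¬ o1 = o0. Proof. unfold mv_one; apply negK. Qed.
Lemma neg0 : ¬ o0 = o1. Proof. reflexivity. Qed.
Lemma neg_inj (x y : A) : ¬ x = ¬ y -> x = y.
Proof. intro H. rewrite <- (negK x), <- (negK y), H. reflexivity. Qed.

Lemma mulC (x y : A) : x ⊙ y = y ⊙ x.
Proof. unfold mv_odot. rewrite addC. reflexivity. Qed.
Lemma mulA (x y z : A) : x ⊙ (y ⊙ z) = x ⊙ y ⊙ z.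
Proof. unfold mv_odot. rewrite !negK, addA. reflexivity. Qed.
Lemma mul1 (x : A) : x ⊙ o1 = x.
Proof. unfold mv_odot. rewrite neg1, add0, negK. reflexivity. Qed.
Lemma mul0 (x : A) : x ⊙ o0 = o0.
Proof. unfold mv_odot. rewrite neg0, add1, neg1. reflexivity. Qed.
Lemma mul0l (x : A) : o0 ⊙ x = o0.
Proof. rewrite mulC; apply mul0. Qed.

Lemma addN (x : A) : ¬ x ⊕ x = o1.
Proof.
  pose proof (mv_luk A x o1) as H.
  fold (@mv_one A) in H.
  rewrite add1, neg1, add0l in H. symmetry; exact H.
Qed.
Lemma mulN (x : A) : x ⊙ ¬ x = o0.
Proof. unfold mv_odot. rewrite negK, addN, neg1. reflexivity. Qed.

Lemma le_refl (x : A) : mv_le x x. Proof. apply addN. Qed.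
Lemma le_addr (u w : A) : mv_le u (u ⊕ w).
Proof. unfold mv_le. rewrite addA, addN, add1l. reflexivity. Qed.
Lemma le_addl (u w : A) : mv_le u (w ⊕ u).
Proof. rewrite addC. apply le_addr. Qed.
Lemma le_one (x : A) : mv_le x o1. Proof. apply add1. Qed.
Lemma le_add_r (x y w : A) : mv_le x y -> mv_le x (y ⊕ w).
Proof. unfold mv_le; intro H. rewrite addA, H, add1l. reflexivity. Qed.

Lemma join_comm (x y : A) : mv_join x y = mv_join y x.
Proof. unfold mv_join, mv_odot. rewrite !negK. apply mv_luk. Qed.
Lemma join_le (x y : A) : mv_le x y -> mv_join x y = y.
Proof. unfold mv_le, mv_join, mv_odot; intro H. rewrite negK, H, neg1, add0l. reflexivity. Qed.
Lemma antisym (x y : A) : mv_le x y -> mv_le y x -> x = y.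
Proof.
  intros H1 H2. rewrite <- (join_le H1), <- (join_le H2) at 1. apply join_comm.
Qed.
Lemma le_decomp (x y : A) : mv_le x y -> y = x ⊕ (y ⊙ ¬ x).
Proof.
  intro H. transitivity (mv_join x y). symmetry; exact (join_le H).
  rewrite join_comm. unfold mv_join. apply addC.
Qed.
Lemma le_trans (x y z : A) : mv_le x y -> mv_le y z -> mv_le x z.
Proof. intros H1 H2. rewrite (le_decomp H2). apply le_add_r; exact H1. Qed.
Lemma add_mono (a a' c : A) : mv_le a a' -> mv_le (a ⊕ c) (a' ⊕ c).
Proof.
  intro H. rewrite (le_decomp H). rewrite <- addA, (addC (a' ⊙ ¬ a) c), addA.
  apply le_addr.
Qed.
Lemma add_mono_l (a a' c : A) : mv_le a a' -> mv_le (c ⊕ a) (c ⊕ a').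
Proof. intro H. rewrite (addC c a), (addC c a'). apply add_mono; exact H. Qed.
Lemma neg_anti (a a' : A) : mv_le a a' -> mv_le (¬ a') (¬ a).
Proof. unfold mv_le; intro H. rewrite negK, addC. exact H. Qed.
Lemma mul_mono (a a' c : A) : mv_le a a' -> mv_le (c ⊙ a) (c ⊙ a').
Proof.
  intro H. unfold mv_odot. apply neg_anti. apply add_mono_l. apply neg_anti; exact H.
Qed.
Lemma mul_le (x y : A) : mv_le (x ⊙ y) x.
Proof.
  unfold mv_le, mv_odot. rewrite negK, <- addA, (addC (¬ y) x), addA, addN, add1l.
  reflexivity.
Qed.
Lemma mul_le_r (x y : A) : mv_le (x ⊙ y) y.
Proof. rewrite mulC. apply mul_le. Qed.

Lemma meet_comm (x y : A) : mv_meet x y = mv_meet y x.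
Proof.
  unfold mv_meet, mv_odot. f_equal.
  pose proof (mv_luk A (¬ x) (¬ y)) as H. rewrite !negK in H.
  rewrite (addC (¬ x) y), (addC (¬ y) x), (addC (¬ x)), (addC (¬ y)).
  symmetry. exact H.
Qed.
Lemma meet_le (z b : A) : mv_le z b -> mv_meet z b = z.
Proof. unfold mv_meet; intro H. unfold mv_le in H. rewrite H. apply mul1. Qed.

Lemma bool_mul (b : A) : b ⊕ b = b -> b ⊙ b = b.
Proof.
  intro Hb. apply antisym. apply mul_le.
  pose proof (meet_comm b (¬ b)) as H. unfold mv_meet in H.
  rewrite negK, Hb, (mulC (¬ b) b), mulN in H.
  unfold mv_odot in H.
  unfold mv_le. apply neg_inj. change (¬ (¬ b ⊕ ¬ (¬ b ⊕ ¬ b)) = ¬ o1). rewrite H, neg1. reflexivity. Qed.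
Lemma bool_add (b : A) : b ⊙ b = b -> b ⊕ b = b.
Proof.
  intro Hb. unfold mv_odot in Hb.
  assert (H : ¬ b ⊕ ¬ b = ¬ b) by (rewrite <- Hb at 3; rewrite negK; reflexivity).
  apply bool_mul in H. unfold mv_odot in H. rewrite !negK in H.
  apply neg_inj; exact H.
Qed.

Lemma mul_bool_le (b z : A) : b ⊙ b = b -> mv_le z b -> z ⊙ b = z.
Proof.
  intros Hb H.
  assert (E : z = b ⊙ (¬ b ⊕ z)).
  { pose proof (meet_le H) as E. rewrite meet_comm in E. symmetry; exact E. }
  rewrite E. rewrite mulC, mulA, Hb. reflexivity.
Qed.
Lemma le_glb (b z x : A) : b ⊙ b = b -> mv_le z x -> mv_le z b -> mv_le z (x ⊙ b).
Proof.
  intros Hb H1 H2. rewrite <- (mul_bool_le Hb H2).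
  rewrite (mulC z b), (mulC x b). apply mul_mono; exact H1.
Qed.

Lemma distr_le (x y z : A) : mv_le (x ⊙ (y ⊕ z)) ((x ⊙ y) ⊕ z).
Proof.
  assert (HJ : mv_le y (¬ x ⊕ (x ⊙ y))).
  { assert (E : ¬ x ⊕ (x ⊙ y) = mv_join y (¬ x)).
    { unfold mv_join, mv_odot. rewrite !negK. rewrite addC, (addC (¬ y)). reflexivity. }
    rewrite E, join_comm. unfold mv_join. apply le_addl. }
  pose proof (add_mono z HJ) as H. unfold mv_le in *.
  rewrite <- H. unfold mv_odot at 1. rewrite negK.
  rewrite (addC (¬ x) (¬ (y ⊕ z))), <- (addA (¬ (y ⊕ z))), (addA (¬ x)). reflexivity. Qed.

Lemma bool_distr (b x y : A) : b ⊙ b = b -> b ⊕ b = b ->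
  (x ⊕ y) ⊙ b = x ⊙ b ⊕ y ⊙ b.
Proof.
  intros Hm Ha. apply antisym.
  - rewrite mulC. rewrite <- Hm at 1. rewrite <- mulA.
    apply le_trans with (b ⊙ ((b ⊙ x) ⊕ y)).
    + apply mul_mono. apply distr_le.
    + rewrite (addC (b ⊙ x) y). eapply le_trans. apply distr_le.
      rewrite (mulC b y), (mulC b x). rewrite addC. apply le_refl.
  - apply le_glb. exact Hm.
    + eapply le_trans. apply add_mono. apply mul_le. apply add_mono_l. apply mul_le.
    + apply le_trans with (b ⊕ b); [|rewrite Ha; apply le_refl].
      eapply le_trans. apply add_mono. apply mul_le_r.
      apply add_mono_l. apply mul_le_r.
Qed.

Lemma join_eq0 (a c : A) : mv_join a c = o0 -> a = o0.
Proof.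
  rewrite join_comm. unfold mv_join. intro H.
  pose proof (le_addl a (c ⊙ ¬ a)) as H1. rewrite H in H1.
  unfold mv_le in H1. rewrite add0 in H1. apply neg_inj. exact H1.
Qed.

Section Der.
Variable d : A -> A.
Hypothesis Hd : odot_join_derivation d.

Lemma d0 : d o0 = o0.
Proof.
  assert (E : o0 ⊙ o0 = o0) by apply mul0.
  transitivity (d (o0 ⊙ o0)). rewrite E; reflexivity.
  rewrite Hd, mul0, mul0l. unfold mv_join. rewrite mul0l, add0. reflexivity.
Qed.
Lemma d_le (x : A) : mv_le (d x) x.
Proof.
  pose proof (Hd x (¬ x)) as H. rewrite mulN, d0 in H.
  symmetry in H. apply join_eq0 in H. unfold mv_odot in H. rewrite negK in H.
  unfold mv_le. apply neg_inj. rewrite H, neg1. reflexivity.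
Qed.
Lemma d_ge (x : A) : mv_le (x ⊙ d o1) (d x).
Proof.
  pose proof (Hd x o1) as H. rewrite mul1, (mul1 (d x)) in H. rewrite H.
  unfold mv_join. apply le_addl.
Qed.

Lemma P1_P2 : (isotone d /\ in_boolean_center (d o1)) <->
     (forall x y : A, d (x ⊕ y) = d x ⊕ d y).
Proof.
  split.
  - intros [Hi Hb]. unfold in_boolean_center in Hb. pose proof (bool_mul Hb) as Hm.
    assert (F : forall x, d x = x ⊙ d o1).
    { intro x. apply antisym. apply le_glb. exact Hm. apply d_le. apply Hi, le_one.
      apply d_ge. }
    intros x y. rewrite (F (x ⊕ y)), (F x), (F y). apply bool_distr; assumption.
  - intro Ha. split.
    + intros x y H. rewrite (le_decomp H), Ha. apply le_addr.
    + unfold in_boolean_center. rewrite <- Ha, add1. reflexivity.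
Qed.

Lemma P1_P3 : (isotone d /\ in_boolean_center (d o1)) <->
     (forall x y : A, d (x ⊙ y) = d x ⊙ d y).
Proof.
  split.
  - intros [Hi Hb]. unfold in_boolean_center in Hb. pose proof (bool_mul Hb) as Hm.
    assert (F : forall x, d x = x ⊙ d o1).
    { intro x. apply antisym. apply le_glb. exact Hm. apply d_le. apply Hi, le_one.
      apply d_ge. }
    intros x y. rewrite (F (x ⊙ y)), (F x), (F y). set (b := d o1) in *.
    rewrite <- Hm at 1. rewrite !mulA. f_equal. rewrite <- !mulA. f_equal.
    apply mulC.
  - intro Hm. split.
    + intros x y H. rewrite <- (meet_le H), meet_comm. unfold mv_meet.
      rewrite Hm. apply mul_le.
    + unfold in_boolean_center. apply bool_add. rewrite <- Hm, mul1. reflexivity.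
Qed.
End Der.
End MV.

Theorem proposition3p22 (A : MVAlgebra) (d : A -> A) :
  odot_join_derivation d ->
  ((isotone d /\ in_boolean_center (d mv_one)) <->
     (forall x y : A, d (mv_oplus x y) = mv_oplus (d x) (d y)))
  /\
  ((forall x y : A, d (mv_oplus x y) = mv_oplus (d x) (d y)) <->
     (forall x y : A, d (mv_odot x y) = mv_odot (d x) (d y))).
Proof.
  intro Hd. pose proof (P1_P2 Hd). pose proof (P1_P3 Hd). tauto.
Qed.
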